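(* Let $\Gamma$ be a countable discrete group and $\mu$ a probability measure on $\Gamma$. Let $\eta\in\mathbb T$ and let $0\neq T\in\mathcal B(\ell^2(\Gamma))$ satisfy $\mathcal P_\mu(T)=\eta T$. Then there exists a nonzero $f\in\ell^\infty(\Gamma)$ with $f*\mu=\eta f$. In particular, if $\mu$ is symmetric and generating, then $-1$ is an eigenvalue of $\mathcal P_\mu$ on $\mathcal B(\ell^2(\Gamma))$ if and only if there exists a nonzero $f\in\ell^\infty(\Gamma)$ with $f*\mu=-f$.
   Context: $\rho$ denotes the right regular representation of $\Gamma$ on $\ell^2(\Gamma)$, $\rho_g\delta_x=\delta_{xg^{-1}}$. The Markov operator $\mathcal P_\mu:\mathcal B(\ell^2(\Gamma))\to\mathcal B(\ell^2(\Gamma))$ is $\mathcal P_\mu(T)=\sum_{g\in\Gamma}\mu(g)\rho_gT\rho_g^*$. For $f\in\ell^\infty(\Gamma)$, $(f*\mu)(g)=\sum_{h\in\Gamma}\mu(h)f(gh)$; identifying $f$ with the multiplication operator $M_f$, one has $\mathcal P_\mu(M_f)=M_{f*\mu}$. A measure $\mu$ is symmetric if $\mu(g)=\mu(g^{-1})$ for all $g$, and generating if its support generates $\Gamma$ as a group. *)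

(* Defs.v *)
From HB Require Import structures.
From mathcomp Require Import all_boot all_order all_algebra finmap.
From mathcomp Require Import boolp classical_sets reals topology normedtype.
From mathcomp Require Import complex.

Set Implicit Arguments.
Unset Strict Implicit.
Unset Printing Implicit Defensive.
Import Order.TTheory GRing.Theory Num.Theory.
Import numFieldTopology.Exports numFieldNormedType.Exports.
Local Open Scope ring_scope.
Local Open Scope classical_set_scope.

Record is_group (G : Type) (mul : G -> G -> G) (inv : G -> G) (e : G) : Prop := {
  grp_mulA : forall x y z, mul x (mul y z) = mul (mul x y) z;
  grp_mul1g : forall x, mul e x = x;
  grp_mulg1 : forall x, mul x e = x;
  grp_mulVg : forall x, mul (inv x) x = e;
  grp_mulgV : forall x, mul x (inv x) = e }.

Definition is_subgroup (G : Type) (mul : G -> G -> G) (inv : G -> G) (e : G)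
  (H : G -> Prop) : Prop :=
  H e /\ (forall x y, H x -> H y -> H (mul x y)) /\ (forall x, H x -> H (inv x)).

Definition in_gen (G : Type) (mul : G -> G -> G) (inv : G -> G) (e : G)
  (S : G -> Prop) (x : G) : Prop :=
  forall H : G -> Prop, is_subgroup mul inv e H -> (forall s, S s -> H s) -> H x.

Definition totally {I : choiceType} : set_system {fset I} :=
  filter_from setT (fun A => [set B | (A `<=` B)%fset]).

Definition partial_sum {I : choiceType} {V : zmodType} (x : I -> V) (A : {fset I}) : V :=
  \sum_(i <- A) x i.

Definition rsum_to {I : choiceType} {R : realType} (f : I -> R) (s : R) : Prop :=
  partial_sum f @ totally --> s.

Definition csum_to {I : choiceType} {R : realType} (f : I -> R[i]) (s : R[i]) : Prop :=
  rsum_to (fun i => complex.Re (f i)) (complex.Re s) /\ rsum_to (fun i => complex.Im (f i)) (complex.Im s).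

(* value of the sum (meaningful when it converges) *)
Definition csum {I : choiceType} {R : realType} (f : I -> R[i]) : R[i] :=
  Complex (lim (partial_sum (fun i => complex.Re (f i)) @ totally))
          (lim (partial_sum (fun i => complex.Im (f i)) @ totally)).

Definition csqnorm {R : realType} (z : R[i]) : R := complex.Re z ^+ 2 + complex.Im z ^+ 2.

Definition prob_measure {G : choiceType} {R : realType} (mu : G -> R) : Prop :=
  (forall g, 0 <= mu g) /\ rsum_to mu 1.

Definition symmetric_measure {G : Type} {R : realType} (inv : G -> G) (mu : G -> R) :=
  forall g, mu (inv g) = mu g.

Definition generating_measure {G : Type} {R : realType}
  (mul : G -> G -> G) (inv : G -> G) (e : G) (mu : G -> R) :=
  forall x, in_gen mul inv e (fun g => mu g != 0) x.

Definition l2sq {G : choiceType} {R : realType} (a : G -> R[i]) (s : R) : Prop :=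
  rsum_to (fun x => csqnorm (a x)) s.

Definition in_l2 {G : choiceType} {R : realType} (a : G -> R[i]) : Prop :=
  exists s, l2sq a s.

Definition l2_inner {G : choiceType} {R : realType} (u v : G -> R[i]) : R[i] :=
  csum (fun x => u x * conjc (v x)).

Definition in_linfty {G : Type} {R : realType} (f : G -> R[i]) : Prop :=
  exists M : R, forall g, csqnorm (f g) <= M.

(* an operator is given by its action on l^2 vectors (values outside l^2 are irrelevant) *)
Definition bounded_op {G : choiceType} {R : realType}
  (T : (G -> R[i]) -> (G -> R[i])) : Prop :=
  (forall a b (c : R[i]), in_l2 a -> in_l2 b ->
     T (fun x => a x + c * b x) = (fun x => T a x + c * T b x)) /\
  (exists K : R, forall a s, l2sq a s -> exists t, l2sq (T a) t /\ t <= K * s).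

Definition nonzero_op {G : choiceType} {R : realType}
  (T : (G -> R[i]) -> (G -> R[i])) : Prop :=
  exists a, in_l2 a /\ exists x, T a x != 0.

(* right regular representation: (rho_g a)(x) = a(x g), so rho_g delta_x = delta_{x g^-1};
   its adjoint rho_g^* = rho_{g^-1} : (rho_g^* a)(x) = a(x g^-1) *)
Definition rho {G : Type} {R : realType} (mul : G -> G -> G) (g : G)
  (a : G -> R[i]) : G -> R[i] := fun x => a (mul x g).

Definition rho_adj {G : Type} {R : realType} (mul : G -> G -> G) (inv : G -> G) (g : G)
  (a : G -> R[i]) : G -> R[i] := fun x => a (mul x (inv g)).

(* P_mu(T) = eta T, where P_mu(T) = sum_g mu(g) rho_g T rho_g^* (weak-operator convergent sum):
   for all a, b in l^2, sum_g mu(g) <rho_g T rho_g^* a, b> = eta <T a, b> *)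
Definition Pmu_eigen {G : choiceType} {R : realType} (mul : G -> G -> G) (inv : G -> G)
  (mu : G -> R) (T : (G -> R[i]) -> (G -> R[i])) (eta : R[i]) : Prop :=
  forall a b, in_l2 a -> in_l2 b ->
    csum_to (fun g => ((mu g)%:C)%C * l2_inner (rho mul g (T (rho_adj mul inv g a))) b)
            (eta * l2_inner (T a) b).

(* f * mu = eta f, with (f * mu)(g) = sum_h mu(h) f(g h) *)
Definition conv_eigen {G : choiceType} {R : realType} (mul : G -> G -> G)
  (mu : G -> R) (f : G -> R[i]) (eta : R[i]) : Prop :=
  forall g, csum_to (fun h => ((mu h)%:C)%C * f (mul g h)) (eta * f g).

(* Main.v *)
Require Import Defs.
From HB Require Import structures.
From mathcomp Require Import all_boot all_order all_algebra finmap.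
From mathcomp Require Import boolp classical_sets reals topology normedtype.
From mathcomp Require Import complex.
From mathcomp Require Import lra ring.
Import Order.TTheory GRing.Theory Num.Theory.
Import numFieldTopology.Exports numFieldNormedType.Exports.
Local Open Scope ring_scope.
Local Open Scope classical_set_scope.

Section SumTheory.
Context {I : choiceType} {R : realType}.
Implicit Types (f g V W : I -> R) (A B : {fset I}).

#[global] Instance totally_filter : ProperFilter (@totally I).
Proof.
eapply filter_from_proper; last by move=> A _; exists A; rewrite /= fsubset_refl.
apply: filter_fromT_filter; first by exists fset0.
by move=> A B /=; exists (A `|` B)%fset => P /=; rewrite fsubUset => /andP[].
Qed.

Lemma nearT (P : {fset I} -> Prop) :
  (exists A, forall B, (A `<=` B)%fset -> P B) -> \forall B \near totally, P B.
Proof. by case=> A HA; exists A => // B /= /HA. Qed.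

Lemma nearE (P : {fset I} -> Prop) :
  (\forall B \near totally, P B) -> exists A, forall B, (A `<=` B)%fset -> P B.
Proof. by case=> A _ HA; exists A => B HB; apply: HA. Qed.

Lemma rsumP f s : rsum_to f s <->
  (forall e : R, 0 < e -> exists A, forall B, (A `<=` B)%fset -> `|s - partial_sum f B| < e).
Proof.
rewrite /rsum_to; split.
  by move/cvgrPdist_lt => H e /H /nearE.
by move=> H; apply/cvgrPdist_lt => e /H /nearT.
Qed.

Lemma rsum_lim f s : rsum_to f s -> lim (partial_sum f @ totally) = s.
Proof. by move=> H; apply: cvg_lim. Qed.

Lemma rsum_ext f g s : (forall x, f x = g x) -> rsum_to f s -> rsum_to g s.
Proof.
move=> fg; suff -> : g = f by [].
by apply: funext => x; rewrite fg.
Qed.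

Lemma ps_split f A B : (A `<=` B)%fset ->
  partial_sum f B = partial_sum f A + partial_sum f (B `\` A)%fset.
Proof.
move=> AB; rewrite /partial_sum (big_fsetID _ (mem A)) /=.
congr (_ + _); apply: eq_fbigl => x; rewrite !inE /=.
  by apply/andP/idP => [[] //|xA]; split=> //; apply: (fsubsetP AB).
by rewrite andbC.
Qed.


Lemma ps_ge0 f A : (forall x, 0 <= f x) -> 0 <= partial_sum f A.
Proof. by move=> f0; rewrite /partial_sum sumr_ge0. Qed.

Lemma ps_mono f A B : (forall x, 0 <= f x) -> (A `<=` B)%fset ->
  partial_sum f A <= partial_sum f B.
Proof. by move=> f0 AB; rewrite (ps_split f _ _ AB) lerDl ps_ge0. Qed.

Lemma ps_le_bound f s M : rsum_to f s -> (forall A, partial_sum f A <= M) -> s <= M.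
Proof.
move=> /rsumP H HM; apply/ler_addgt0Pr => e e0.
have [A HA] := H e e0; have := HA A (fsubset_refl _).
move: (HM A); rewrite ltr_norml => h1 /andP[h2 h3]; lra.
Qed.

Lemma ps_le_lim f s A : (forall x, 0 <= f x) -> rsum_to f s -> partial_sum f A <= s.
Proof.
move=> f0 /rsumP H; apply/ler_addgt0Pr => e e0.
have [B HB] := H e e0; have := HB (A `|` B)%fset (fsubsetUr _ _).
have := ps_mono _ _ _ f0 (fsubsetUl A B); rewrite ltr_norml => h1 /andP[h2 h3]; lra.
Qed.

Lemma ps_norm_bound f s M : rsum_to f s -> (forall A, `|partial_sum f A| <= M) -> `|s| <= M.
Proof.
move=> /rsumP H HM; apply/ler_addgt0Pr => e e0.
have [A HA] := H e e0; have := HA A (fsubset_refl _).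
move: (HM A) => h1 h2.
have : `|s| <= `|s - partial_sum f A| + `|partial_sum f A|.
  by rewrite -{1}(subrK (partial_sum f A) s) ler_normD.
lra.
Qed.

Lemma monotone_cvg f M : (forall x, 0 <= f x) -> (forall A, partial_sum f A <= M) ->
  exists s, rsum_to f s.
Proof.
move=> f0 HM; set E := range (partial_sum f).
have hub : has_ubound E.
  by exists M => y [A _ <-]; apply: HM.
have hsup : has_sup E by split => //; exists (partial_sum f fset0); exists fset0.
exists (sup E); apply/rsumP => e e0.
have [_ [A _ <-] HA] := sup_adherent e0 hsup.
exists A => B AB; have h1 := ps_mono _ _ _ f0 AB.
have h2 : partial_sum f B <= sup E by apply: ub_le_sup => //; exists B.
rewrite ltr_norml; apply/andP; split; lra.
Qed.

Lemma ps_add f g A : partial_sum (fun x => f x + g x) A = partial_sum f A + partial_sum g A.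
Proof. by rewrite /partial_sum big_split. Qed.
Lemma ps_scale (c : R) f A : partial_sum (fun x => c * f x) A = c * partial_sum f A.
Proof. by rewrite /partial_sum mulr_sumr. Qed.
Lemma ps_opp f A : partial_sum (fun x => - f x) A = - partial_sum f A.
Proof. by rewrite /partial_sum sumrN. Qed.
Lemma ps_norm f A : `|partial_sum f A| <= partial_sum (fun x => `|f x|) A.
Proof. exact: ler_norm_sum. Qed.
Lemma ps_le f g A : (forall x, f x <= g x) -> partial_sum f A <= partial_sum g A.
Proof. by move=> fg; apply: ler_sum => x _. Qed.

Lemma rsum_add f g s t : rsum_to f s -> rsum_to g t -> rsum_to (fun x => f x + g x) (s + t).
Proof.
move=> hf hg; rewrite /rsum_to.
rewrite (_ : partial_sum _ = fun A => partial_sum f A + partial_sum g A); last first.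
  by apply: funext => A; rewrite ps_add.
exact: cvgD.
Qed.

Lemma rsum_scale (c : R) f s : rsum_to f s -> rsum_to (fun x => c * f x) (c * s).
Proof.
move=> hf; rewrite /rsum_to.
rewrite (_ : partial_sum _ = fun A => c * partial_sum f A); last first.
  by apply: funext => A; rewrite ps_scale.
exact: cvgMl_tmp.
Qed.

Lemma rsum_opp f s : rsum_to f s -> rsum_to (fun x => - f x) (- s).
Proof.
move=> hf; have := rsum_scale (-1) _ _ hf; rewrite mulN1r.
by apply: rsum_ext => x; rewrite mulN1r.
Qed.

Lemma dominated_cvg W V S : (forall x, `|W x| <= V x) -> rsum_to V S ->
  exists s, rsum_to W s.
Proof.
move=> WV hV.
have V0 x : 0 <= V x by apply: le_trans (WV x).
have [p hp] : exists p, rsum_to (fun x => `|W x| + W x) p.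
  apply: (@monotone_cvg _ (2 * S)) => [x|A].
    by have := ler_norm (- W x); rewrite normrN; lra.
  have h x : `|W x| + W x <= 2 * V x.
    by have := WV x; have := ler_norm (W x); lra.
  apply: le_trans (ps_le _ _ A h) _.
  by rewrite ps_scale ler_wpM2l // ps_le_lim.
have [q hq] : exists q, rsum_to (fun x => `|W x|) q.
  apply: (@monotone_cvg _ S) => [x|A] //.
  apply: le_trans (ps_le _ _ _ WV) _; exact: ps_le_lim.
exists (p - q); have := rsum_add _ _ _ _ hp (rsum_opp _ _ hq).
by apply: rsum_ext => x; lra.
Qed.

Lemma tail_small V S (e : R) : (forall x, 0 <= V x) -> rsum_to V S -> 0 < e ->
  exists X0, forall B, (X0 `<=` B)%fset -> partial_sum V (B `\` X0)%fset <= e.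
Proof.
move=> V0 hV e0; have hV' := hV; move/rsumP: hV => /(_ e e0) [X0 HX].
exists X0 => B XB; have := HX X0 (fsubset_refl _).
have := ps_le_lim _ _ B V0 hV'; rewrite (ps_split V _ _ XB) ltr_norml => h1 /andP[h2 h3]; lra.
Qed.

Lemma tail_lim W V s X0 (e : R) : (forall x, `|W x| <= V x) -> rsum_to W s ->
  (forall B, (X0 `<=` B)%fset -> partial_sum V (B `\` X0)%fset <= e) ->
  `|s - partial_sum W X0| <= e.
Proof.
move=> WV /rsumP hW HX; apply/ler_addgt0Pr => d d0.
have [B1 HB1] := hW d d0; set B := (X0 `|` B1)%fset.
have h1 := HB1 B (fsubsetUr _ _).
have h2 := HX B (fsubsetUl _ _).
have h3 := le_trans (ps_norm W (B `\` X0)%fset) (ps_le _ _ _ WV).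
rewrite (ps_split W _ _ (fsubsetUl X0 B1)) in h1.
set a := partial_sum W X0 in h1 *; set b := partial_sum W (B `\` X0)%fset in h1 h3 *.
have : `|s - a| <= `|s - (a + b)| + `|b|.
  by rewrite (_ : s - a = (s - (a + b)) + b); [exact: ler_normD|lra].
lra.
Qed.


Lemma rsum_single f y : (forall x, x != y -> f x = 0) -> rsum_to f (f y).
Proof.
move=> f0; apply/rsumP => e e0; exists [fset y]%fset => B yB.
have yB' : y \in B by apply: (fsubsetP yB); rewrite inE.
rewrite /partial_sum (big_fsetD1 y yB') /= big1_seq ?addr0 ?subrr ?normr0 //.
by move=> x /andP[_]; rewrite !inE => /andP[xy _]; apply: f0.
Qed.

Lemma ps_single f y : partial_sum f [fset y]%fset = f y.
Proof. by rewrite /partial_sum big_seq_fset1. Qed.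

Lemma cvg_finsum (J : Type) (X : seq J) (u : J -> {fset I} -> R) (c : J -> R) :
  (forall j, u j @ totally --> c j) ->
  (fun B => \sum_(j <- X) u j B) @ totally --> \sum_(j <- X) c j.
Proof.
move=> hu; elim: X => [|j X IH].
  rewrite big_nil (_ : (fun B => _) = fun _ => 0); first exact: cvg_cst.
  by apply: funext => B; rewrite big_nil.
rewrite big_cons (_ : (fun B => _) = fun B => u j B + \sum_(j0 <- X) u j0 B).
  exact: cvgD.
by apply: funext => B; rewrite big_cons.
Qed.

End SumTheory.

Lemma norm3 (R : realType) (a b c d : R) : `|a - d| <= `|a - b| + `|b - c| + `|c - d|.
Proof.
rewrite (_ : a - d = (a - b) + (b - c) + (c - d)); last by lra.
by apply: le_trans (ler_normD _ _) _; rewrite lerD2r ler_normD.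
Qed.

Section Key.
Variables (G : choiceType) (R : realType).

Lemma key (mu : G -> R) (K : G -> G -> R) (V c : G -> R) SV :
  (forall g, 0 <= mu g) -> rsum_to mu 1 -> rsum_to V SV ->
  (forall g x, `|K g x| <= V x) -> (forall x, rsum_to (fun g => mu g * K g x) (c x)) ->
  rsum_to (fun g => mu g * lim (partial_sum (K g) @ totally)) (lim (partial_sum c @ totally)).
Proof.
move=> mu0 hmu hV KV hc.
have V0 x : 0 <= V x by apply: le_trans (KV x x).
have mu1 A : partial_sum mu A <= 1 by apply: ps_le_lim.
have cV x : `|c x| <= V x.
  apply: (ps_norm_bound _ _ _ (hc x)) => A.
  apply: le_trans (ps_norm _ _) _.
  apply: le_trans (ps_le _ (fun g => V x * mu g) A _) _.
    by move=> g; rewrite normrM ger0_norm // mulrC ler_wpM2r.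
  by rewrite ps_scale; rewrite -[X in _ <= X]mulr1 ler_wpM2l.
have [L hL] := dominated_cvg _ _ _ cV hV.
rewrite (rsum_lim _ _ hL).
have hK g : rsum_to (K g) (lim (partial_sum (K g) @ totally)).
  have [s hs] := dominated_cvg _ _ _ (KV g) hV.
  by rewrite (rsum_lim _ _ hs).
apply/rsumP => e e0; set eps := e / 4.
have eps0 : 0 < eps by rewrite divr_gt0.
have [X0 HX0] := tail_small _ _ _ V0 hV eps0.
have tJ g := tail_lim _ _ _ _ _ (KV g) (hK g) HX0.
have tL := tail_lim _ _ _ _ _ cV hL HX0.
have hfin := cvg_finsum _ X0 (fun x => partial_sum (fun g => mu g * K g x)) c hc.
move/cvgrPdist_lt: hfin => /(_ eps eps0) /nearE [B1 HB1].
exists B1 => B HB; have h1 := HB1 B HB.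
have Eq : \sum_(x <- X0) partial_sum (fun g => mu g * K g x) B =
          partial_sum (fun g => mu g * partial_sum (K g) X0) B.
  rewrite /partial_sum exchange_big /=; apply: eq_bigr => g _.
  by rewrite mulr_sumr.
rewrite Eq in h1.
set J := fun g => lim (partial_sum (K g) @ totally).
have h3 : `|partial_sum (fun g => mu g * partial_sum (K g) X0) B -
            partial_sum (fun g => mu g * J g) B| <= eps.
  rewrite -ps_opp -ps_add.
  apply: le_trans (ps_norm _ _) _.
  apply: le_trans (ps_le _ (fun g => eps * mu g) B _) _.
    move=> g; rewrite -mulrBr normrM ger0_norm // mulrC ler_wpM2r //.
    by rewrite distrC; apply: tJ.
  by rewrite ps_scale; rewrite -[X in _ <= X]mulr1 ler_wpM2l // ltW.
have := norm3 _ L (partial_sum c X0) (partial_sum (fun g => mu g * partial_sum (K g) X0) B)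
  (partial_sum (fun g => mu g * J g) B).
rewrite /eps in tL h1 h3 *; lra.
Qed.

End Key.

Section Complex.
Variable R : realType.

Lemma ReM (x y : R[i]) : complex.Re (x * y) = complex.Re x * complex.Re y - complex.Im x * complex.Im y.
Proof. by case: x => ? ?; case: y. Qed.
Lemma ImM (x y : R[i]) : complex.Im (x * y) = complex.Re x * complex.Im y + complex.Im x * complex.Re y.
Proof. by case: x => ? ?; case: y. Qed.
Lemma ReJ (x : R[i]) : complex.Re (conjc x) = complex.Re x. Proof. by case: x. Qed.
Lemma ImJ (x : R[i]) : complex.Im (conjc x) = - complex.Im x. Proof. by case: x. Qed.
Lemma ReC (r : R) (x : R[i]) : complex.Re ((r%:C)%C * x) = r * complex.Re x.
Proof. rewrite ReM /=; lra. Qed.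
Lemma ImC (r : R) (x : R[i]) : complex.Im ((r%:C)%C * x) = r * complex.Im x.
Proof. rewrite ImM /=; lra. Qed.
Lemma ReN1 (x : R[i]) : complex.Re (-1 * x) = - complex.Re x.
Proof. rewrite ReM /=; lra. Qed.
Lemma ImN1 (x : R[i]) : complex.Im (-1 * x) = - complex.Im x.
Proof. rewrite ImM /=; lra. Qed.
Lemma csqnorm_ge0 (x : R[i]) : 0 <= csqnorm x.
Proof. by rewrite /csqnorm addr_ge0 // sqr_ge0. Qed.
Lemma csqnormM (x y : R[i]) : csqnorm (x * y) = csqnorm x * csqnorm y.
Proof. rewrite /csqnorm ReM ImM; ring. Qed.
Lemma Re0 : complex.Re (0 : R[i]) = 0. Proof. by []. Qed.
Lemma Im0 : complex.Im (0 : R[i]) = 0. Proof. by []. Qed.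

Lemma csum_single (G : choiceType) (h : G -> R[i]) (y : G) :
  (forall x : G, x != y -> h x = 0) -> csum h = h y.
Proof.
move=> h0; rewrite /csum.
rewrite (rsum_lim _ _ (rsum_single (fun x => complex.Re (h x)) y _)); last first.
  by move=> ? /h0 ->.
rewrite (rsum_lim _ _ (rsum_single (fun x => complex.Im (h x)) y _)); last first.
  by move=> ? /h0 ->.
by case: (h y).
Qed.

End Complex.

Definition dlt {G : countType} {R : realType} (y : G) : G -> R[i] :=
  fun x => if x == y then 1 else 0.

Lemma l2_inner_dlt (G : countType) (R : realType) (u : G -> R[i]) y :
  l2_inner u (dlt y) = u y.
Proof.
rewrite /l2_inner (@csum_single _ _ _ y); first by rewrite /dlt eqxx conjc1 mulr1.
by move=> x xy; rewrite /dlt (negbTE xy) conjc0 mulr0.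
Qed.

Lemma in_l2_dlt (G : countType) (R : realType) (y : G) : in_l2 (@dlt G R y).
Proof.
exists (csqnorm (@dlt G R y y)); apply: rsum_single => x xy.
by rewrite /dlt (negbTE xy) /csqnorm /=; lra.
Qed.

Lemma rsum_reindex (I : choiceType) (R : realType) (f : I -> R) s (sg tau : I -> I) :
  (forall x, sg (tau x) = x) -> injective sg -> rsum_to f s -> rsum_to (fun x => f (sg x)) s.
Proof.
move=> st inj /rsumP H; apply/rsumP => e e0; have [A HA] := H e e0.
exists [fset tau x | x in A]%fset => B HB.
have -> : partial_sum (fun x => f (sg x)) B = partial_sum f [fset sg x | x in B]%fset.
  by rewrite /partial_sum big_imfset //= => x y _ _; apply: inj.
apply: HA; apply/fsubsetP => x xA; apply/imfsetP; exists (tau x) => //.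
by apply: (fsubsetP HB); apply/imfsetP; exists x.
Qed.

Section Group.
Variables (G : countType) (mul : G -> G -> G) (inv : G -> G) (e : G).
Hypothesis hG : is_group mul inv e.

Lemma inv_e : inv e = e.
Proof. by rewrite -[inv e](grp_mulg1 hG) (grp_mulVg hG). Qed.

Lemma mulgK' x g : mul (mul x g) (inv g) = x.
Proof. by rewrite -(grp_mulA hG) (grp_mulgV hG) (grp_mulg1 hG). Qed.

Lemma mulgVK' x g : mul (mul x (inv g)) g = x.
Proof. by rewrite -(grp_mulA hG) (grp_mulVg hG) (grp_mulg1 hG). Qed.

Lemma inv_mul g h : inv (mul g h) = mul (inv h) (inv g).
Proof.
have E : mul (mul g h) (mul (inv h) (inv g)) = e.
  by rewrite (grp_mulA hG) mulgK' (grp_mulgV hG).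
rewrite -[inv (mul g h)](grp_mulg1 hG) -E (grp_mulA hG) (grp_mulVg hG).
by rewrite (grp_mul1g hG).
Qed.

Lemma rho_adj_comp (R : realType) (a : G -> R[i]) g h :
  rho_adj mul inv h (rho_adj mul inv g a) = rho_adj mul inv (mul g h) a.
Proof. by apply: funext => x; rewrite /rho_adj inv_mul (grp_mulA hG). Qed.

Lemma rho_adj_e (R : realType) (a : G -> R[i]) : rho_adj mul inv e a = a.
Proof. by apply: funext => x; rewrite /rho_adj inv_e (grp_mulg1 hG). Qed.

Lemma l2sq_rho_adj (R : realType) (a : G -> R[i]) s g :
  l2sq a s -> l2sq (rho_adj mul inv g a) s.
Proof.
move=> h; rewrite /l2sq /rho_adj.
have P1 x : mul (mul x g) (inv g) = x by rewrite mulgK'.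
have P2 : injective (fun x => mul x (inv g)).
  by move=> x y /(congr1 (fun z => mul z g)); rewrite !mulgVK'.
have H := rsum_reindex _ _ (fun x => csqnorm (a x)) s _ (fun x => mul x g) P1 P2 h.
exact H.
Qed.

Lemma single_le (R : realType) (u : G -> R[i]) t z : l2sq u t -> csqnorm (u z) <= t.
Proof.
move=> h; rewrite -(ps_single (fun x => csqnorm (u x)) z).
by apply: ps_le_lim => // x; apply: csqnorm_ge0.
Qed.

End Group.

Lemma part1 (G : countType) (mul : G -> G -> G) (inv : G -> G) (e : G)
    (R : realType) (mu : G -> R) : is_group mul inv e ->
  forall (eta : R[i]) (T : (G -> R[i]) -> (G -> R[i])),
  bounded_op T -> nonzero_op T -> Pmu_eigen mul inv mu T eta ->
  exists f : G -> R[i], in_linfty f /\ (exists g, f g != 0) /\ conv_eigen mul mu f eta.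
Proof.
move=> hG eta T [_ [K hK]] [a [[s ha] [x0 hx0]]] hP.
have ha' g := l2sq_rho_adj _ _ _ _ hG _ _ _ g ha.
exists (fun g => T (rho_adj mul inv g a) (mul x0 g)); split; [|split].
- exists (K * s) => g; have [t [ht tK]] := hK _ _ (ha' g).
  apply: le_trans tK; exact: single_le ht.
- by exists e => /=; rewrite (rho_adj_e _ _ _ _ hG) (grp_mulg1 hG).
- move=> g.
  have := hP (rho_adj mul inv g a) (dlt (mul x0 g)) (ex_intro _ s (ha' g)) (in_l2_dlt _ _ _).
  rewrite l2_inner_dlt.
  rewrite (_ : (fun h => _) = fun h => ((mu h)%:C)%C *
             T (rho_adj mul inv (mul g h) a) (mul x0 (mul g h))) //.
  apply: funext => h; rewrite l2_inner_dlt /rho (rho_adj_comp _ _ _ _ hG).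
  by rewrite (grp_mulA hG).
Qed.

Section Bounds.
Variable R : realType.

Lemma nsq (x : R) : `|x| ^+ 2 = x ^+ 2.
Proof. exact: real_normK (num_real x). Qed.

Lemma prod_le (x y : R) : `|x * y| <= (x ^+ 2 + y ^+ 2) / 2.
Proof.
rewrite normrM -nsq -(nsq y).
have := sqr_ge0 (`|x| - `|y|); rewrite !expr2 => h; nra.
Qed.

Lemma abs_le_sq (p M : R) : 0 <= M -> p ^+ 2 <= M -> `|p| <= M + 1.
Proof.
rewrite -nsq => M0 h; have p0 := normr_ge0 p; rewrite expr2 in h; nra.
Qed.

Lemma uv_le (a b : R[i]) :
  `|complex.Re (a * conjc b)| + `|complex.Im (a * conjc b)| <= csqnorm a + csqnorm b.
Proof.
rewrite ReM ImM ReJ ImJ /csqnorm.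
case: a => a1 a2; case: b => b1 b2 /=.
have h1 := prod_le a1 b1; have h2 := prod_le a2 b2.
have h3 := prod_le a1 b2; have h4 := prod_le a2 b1.
have h5 : `|a1 * b1 - a2 * - b2| <= `|a1 * b1| + `|a2 * b2|.
  by rewrite mulrN opprK; apply: ler_normD.
have h6 : `|a1 * - b2 + a2 * b1| <= `|a1 * b2| + `|a2 * b1|.
  by rewrite mulrN -normrN opprD opprK; apply: le_trans (ler_normD _ _) _; rewrite normrN.
lra.
Qed.

Lemma ReIm_bound (z a b : R[i]) M : 0 <= M -> csqnorm z <= M ->
  `|complex.Re (z * a * conjc b)| <= (M + 1) * (csqnorm a + csqnorm b) /\
  `|complex.Im (z * a * conjc b)| <= (M + 1) * (csqnorm a + csqnorm b).
Proof.
move=> M0 hz.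
have hp : `|complex.Re z| <= M + 1.
  apply: abs_le_sq => //; apply: le_trans hz; rewrite /csqnorm lerDl sqr_ge0 //.
have hq : `|complex.Im z| <= M + 1.
  apply: abs_le_sq => //; apply: le_trans hz; rewrite /csqnorm lerDr sqr_ge0 //.
have huv := uv_le a b.
set u := complex.Re (a * conjc b) in huv; set v := complex.Im (a * conjc b) in huv.
have U0 := normr_ge0 u; have V0 := normr_ge0 v.
rewrite -mulrA ReM ImM -/u -/v; split.
- apply: le_trans (ler_normB _ _) _; rewrite !normrM.
  have : `|complex.Re z| * `|u| <= (M + 1) * `|u| by rewrite ler_wpM2r.
  have : `|complex.Im z| * `|v| <= (M + 1) * `|v| by rewrite ler_wpM2r.
  nra.
- apply: le_trans (ler_normD _ _) _; rewrite !normrM.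
  have : `|complex.Re z| * `|v| <= (M + 1) * `|v| by rewrite ler_wpM2r.
  have : `|complex.Im z| * `|u| <= (M + 1) * `|u| by rewrite ler_wpM2r.
  nra.
Qed.

End Bounds.

Lemma part2b (G : countType) (mul : G -> G -> G) (inv : G -> G) (e : G)
    (R : realType) (mu : G -> R) : is_group mul inv e -> prob_measure mu ->
  forall f : G -> R[i], in_linfty f -> (exists g, f g != 0) -> conv_eigen mul mu f (-1) ->
  exists T : (G -> R[i]) -> (G -> R[i]),
    bounded_op T /\ nonzero_op T /\ Pmu_eigen mul inv mu T (-1).
Proof.
move=> hG [mu0 hmu] f [M hM] [g0 hg0] hconv.
have M0 : 0 <= M by apply: le_trans (hM g0); apply: csqnorm_ge0.
exists (fun u x => f x * u x); split; [|split].
- split.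
    by move=> a b c _ _; apply: funext => x; ring.
  exists M => a s ha.
  have hps A : partial_sum (fun x => csqnorm (f x * a x)) A <= M * s.
    apply: le_trans (ps_le _ (fun x => M * csqnorm (a x)) A _) _.
      by move=> x; rewrite csqnormM ler_wpM2r // csqnorm_ge0.
    rewrite ps_scale ler_wpM2l //; apply: ps_le_lim ha => x; exact: csqnorm_ge0.
  have [t ht] := monotone_cvg _ _ (fun x => csqnorm_ge0 _ _) hps.
  by exists t; split => //; apply: ps_le_bound ht hps.
- exists (dlt g0); split; first exact: in_l2_dlt.
  by exists g0; rewrite /dlt eqxx mulr1.
move=> a b [sa ha] [sb hb].
set V := fun x => (M + 1) * (csqnorm (a x) + csqnorm (b x)).
have hV : rsum_to V ((M + 1) * (sa + sb)) by apply: rsum_scale; apply: rsum_add.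
have EI g : l2_inner (rho mul g (fun x => f x * rho_adj mul inv g a x)) b =
    csum (fun x => f (mul x g) * a x * conjc (b x)).
  rewrite /l2_inner /rho /rho_adj; congr csum; apply: funext => x.
  by rewrite (mulgK' _ _ _ _ hG).
have KV g x := ReIm_bound _ (f (mul x g)) (a x) (b x) _ M0 (hM (mul x g)).
have KV0 x := ReIm_bound _ (f x) (a x) (b x) _ M0 (hM x).
split.
- set K := fun g x => complex.Re (f (mul x g) * a x * conjc (b x)).
  set c := fun x => - complex.Re (f x * a x * conjc (b x)).
  have hc x : rsum_to (fun g => mu g * K g x) (c x).
    have [hR hI] := hconv x.
    have hR' : rsum_to (fun h => mu h * complex.Re (f (mul x h))) (- complex.Re (f x)).
      by rewrite -ReN1; apply: rsum_ext hR => h; rewrite ReC.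
    have hI' : rsum_to (fun h => mu h * complex.Im (f (mul x h))) (- complex.Im (f x)).
      by rewrite -ImN1; apply: rsum_ext hI => h; rewrite ImC.
    set w := a x * conjc (b x).
    have := rsum_add _ _ _ _ (rsum_scale (complex.Re w) _ _ hR') (rsum_scale (- complex.Im w) _ _ hI').
    rewrite (_ : _ + _ = c x); last by rewrite /c -mulrA ReM -/w; ring.
    by apply: rsum_ext => h; rewrite /K -mulrA ReM -/w; ring.
  have Hk := key _ _ mu K V c _ mu0 hmu hV (fun g x => (KV g x).1) hc.
  have [s0 hs0] := dominated_cvg _ V _ (fun x => (KV0 x).1) hV.
  have El : lim (partial_sum c @ totally) = - s0 by apply: rsum_lim; apply: rsum_opp.
  rewrite ReN1 (_ : complex.Re (l2_inner _ b) = s0); last first.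
    by rewrite /l2_inner /csum /= (rsum_lim _ _ hs0).
  by rewrite -El; apply: rsum_ext Hk => g; rewrite ReC EI.
- set K := fun g x => complex.Im (f (mul x g) * a x * conjc (b x)).
  set c := fun x => - complex.Im (f x * a x * conjc (b x)).
  have hc x : rsum_to (fun g => mu g * K g x) (c x).
    have [hR hI] := hconv x.
    have hR' : rsum_to (fun h => mu h * complex.Re (f (mul x h))) (- complex.Re (f x)).
      by rewrite -ReN1; apply: rsum_ext hR => h; rewrite ReC.
    have hI' : rsum_to (fun h => mu h * complex.Im (f (mul x h))) (- complex.Im (f x)).
      by rewrite -ImN1; apply: rsum_ext hI => h; rewrite ImC.
    set w := a x * conjc (b x).
    have := rsum_add _ _ _ _ (rsum_scale (complex.Im w) _ _ hR') (rsum_scale (complex.Re w) _ _ hI').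
    rewrite (_ : _ + _ = c x); last by rewrite /c -mulrA ImM -/w; ring.
    by apply: rsum_ext => h; rewrite /K -mulrA ImM -/w; ring.
  have Hk := key _ _ mu K V c _ mu0 hmu hV (fun g x => (KV g x).2) hc.
  have [s0 hs0] := dominated_cvg _ V _ (fun x => (KV0 x).2) hV.
  have El : lim (partial_sum c @ totally) = - s0 by apply: rsum_lim; apply: rsum_opp.
  rewrite ImN1 (_ : complex.Im (l2_inner _ b) = s0); last first.
    by rewrite /l2_inner /csum /= (rsum_lim _ _ hs0).
  by rewrite -El; apply: rsum_ext Hk => g; rewrite ImC EI.
Qed.

Theorem proposition2p1 (G : countType) (mul : G -> G -> G) (inv : G -> G) (e : G)
    (R : realType) (mu : G -> R) :
  is_group mul inv e -> prob_measure mu ->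
  (forall (eta : R[i]) (T : (G -> R[i]) -> (G -> R[i])),
      csqnorm eta = 1 -> bounded_op T -> nonzero_op T -> Pmu_eigen mul inv mu T eta ->
      exists f : G -> R[i], in_linfty f /\ (exists g, f g != 0) /\ conv_eigen mul mu f eta) /\
  (symmetric_measure inv mu -> generating_measure mul inv e mu ->
     ((exists T : (G -> R[i]) -> (G -> R[i]),
          bounded_op T /\ nonzero_op T /\ Pmu_eigen mul inv mu T (-1)) <->
      (exists f : G -> R[i], in_linfty f /\ (exists g, f g != 0) /\ conv_eigen mul mu f (-1)))).
Proof.
move=> hG hmu; split.
  by move=> eta T _; exact: (part1 _ _ _ _ _ _ hG).
move=> _ _; split.
  by move=> [T [hT [hnz hP]]]; apply: (part1 _ _ _ _ _ _ hG _ T).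
by move=> [f [hf [hnz hc]]]; apply: (part2b _ _ _ _ _ _ hG hmu f).
Qed.
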